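(* For any $\tilde x\in\widetilde{\mathcal{X}}_\ell$ and any $\tilde y\in\widetilde{\mathcal{Y}}_{\mathcal{M}}(\tilde x)$, the distribution $Q(\tilde y,\tilde x,\Xi(\tilde x))$ has the submodular dominance property: for every submodular function $f:\{0,1\}^n\to\mathbb{R}$, $$\mathbb{E}_{\hat y\sim Q(\tilde y,\tilde x,\Xi(\tilde x))}[f(\hat y)]\ \ge\ \mathbb{E}_{\hat y\sim\mathbf{Ind}(\tilde y)}[f(\hat y)].$$
   Context: $\mathcal{M}$ is a matroid on $[n]$ with matroid polytope $\mathcal{P}(\mathcal{M})$. $\mathcal{X}_\ell=\{x\in\{0,1\}^n:\sum_ix_i\le\ell\}$, $\widetilde{\mathcal{X}}_\ell=\{\tilde x\in[0,1]^n:\sum_i\tilde x_i\le\ell\}$, $\widetilde{\mathcal{Y}}_{\mathcal{M}}(\tilde x)=\{\tilde y\in[0,1]^n:\tilde y\in\mathcal{P}(\mathcal{M}),\tilde y\le\tilde x\}$. For $p\in[0,1]^n$, $\mathbf{Ind}(p)$ is the distribution of a random vector in $\{0,1\}^n$ with independent coordinates, coordinate $i$ equal to $1$ with probability $p_i$. $\Xi$ is randomized pipage rounding (Chekuri–Vondrák–Zenklusen 2009) from $\widetilde{\mathcal{X}}_\ell$ to $\mathcal{X}_\ell$: repeatedly pick two fractional coordinates $i,j$, set $\epsilon_1=\min(1-\tilde x_i,\tilde x_j)$, $\epsilon_2=\min(\tilde x_i,1-\tilde x_j)$, and with probability $\epsilon_2/(\epsilon_1+\epsilon_2)$ move to $(\tilde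 x_i+\epsilon_1,\tilde x_j-\epsilon_1)$, else to $(\tilde x_i-\epsilon_2,\tilde x_j+\epsilon_2)$, until integral (a lone fractional coordinate is handled as in that reference). The randomized map $Q(\tilde y,\tilde x,x)$: $a_i=\tilde y_i/\tilde x_i$ if $\tilde x_i\ne0$, else $0$; independent $c_i\sim\mathrm{Bernoulli}(a_i)$; output $\hat y$ with $\hat y_i=1$ iff $x_i=1$ and $c_i=1$. $Q(\tilde y,\tilde x,\Xi(\tilde x))$ is the distribution of $Q(\tilde y,\tilde x,x)$ with $x\sim\Xi(\tilde x)$ independent of the $c_i$. *)

(* Defs.v *)
(* Discrete distributions over {0,1}^n are functions
   {ffun 'I_n -> bool} -> R (probability mass functions). *)
From HB Require Import structures.
From mathcomp Require Import all_boot all_order all_algebra.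
Set Implicit Arguments. Unset Strict Implicit. Unset Printing Implicit Defensive.
Import Order.TTheory GRing.Theory Num.Theory.
Local Open Scope ring_scope.

Section Defs.
Variables (R : realFieldType) (n : nat).

Definition bvec := {ffun 'I_n -> bool}.

Definition is_matroid (M : {set {set 'I_n}}) : Prop :=
  [/\ set0 \in M,
      (forall A B : {set 'I_n}, B \in M -> A \subset B -> A \in M) &
      (forall A B : {set 'I_n}, A \in M -> B \in M -> (#|A| < #|B|)%N ->
          exists2 e, e \in B :\: A & e |: A \in M)].

Definition matroid_polytope (M : {set {set 'I_n}}) (y : 'I_n -> R) : Prop :=
  exists lam : {set 'I_n} -> R,
    [/\ forall S, 0 <= lam S,
        forall S, S \notin M -> lam S = 0,
        \sum_(S : {set 'I_n}) lam S = 1 &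
        forall i, y i = \sum_(S : {set 'I_n} | i \in S) lam S].

Definition in01 (x : 'I_n -> R) : Prop := forall i, 0 <= x i <= 1.

Definition Xtilde (l : nat) (x : 'I_n -> R) : Prop :=
  in01 x /\ \sum_i x i <= l%:R.

Definition Ytilde (M : {set {set 'I_n}}) (x y : 'I_n -> R) : Prop :=
  [/\ in01 y, matroid_polytope M y & forall i, y i <= x i].

Definition Ind (p : 'I_n -> R) (y : bvec) : R :=
  \prod_i (if y i then p i else 1 - p i).

Definition expect (P : bvec -> R) (f : bvec -> R) : R :=
  \sum_(y : bvec) P y * f y.

Definition submodular (f : bvec -> R) : Prop :=
  forall x y : bvec,
    f [ffun i => x i || y i] + f [ffun i => x i && y i] <= f x + f y.

Definition upd (x : 'I_n -> R) (i : 'I_n) (v : R) : 'I_n -> R :=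
  fun k => if k == i then v else x k.

Definition pip_e1 (x : 'I_n -> R) (i j : 'I_n) : R := Num.min (1 - x i) (x j).
Definition pip_e2 (x : 'I_n -> R) (i j : 'I_n) : R := Num.min (x i) (1 - x j).

Definition fractional (v : R) : bool := (0 < v) && (v < 1).

(* pipage x D : D is an output distribution of randomized pipage rounding
   started at x, for SOME (adaptive) choice of the pair of fractional
   coordinates at every step. *)
Inductive pipage : ('I_n -> R) -> (bvec -> R) -> Prop :=
| pip_int x :
    (forall i, x i = 0 \/ x i = 1) ->
    pipage x (fun y => if y == [ffun i => x i == 1] then 1 else 0)
| pip_pair x (i j : 'I_n) D1 D2 :
    i != j -> fractional (x i) -> fractional (x j) ->
    pipage (upd (upd x i (x i + pip_e1 x i j)) j (x j - pip_e1 x i j)) D1 ->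
    pipage (upd (upd x i (x i - pip_e2 x i j)) j (x j + pip_e2 x i j)) D2 ->
    pipage x (fun y =>
      pip_e2 x i j / (pip_e1 x i j + pip_e2 x i j) * D1 y +
      (1 - pip_e2 x i j / (pip_e1 x i j + pip_e2 x i j)) * D2 y)
| pip_lone x (i : 'I_n) D1 D0 :
    fractional (x i) -> (forall k, k != i -> x k = 0 \/ x k = 1) ->
    pipage (upd x i 1) D1 -> pipage (upd x i 0) D0 ->
    pipage x (fun y => x i * D1 y + (1 - x i) * D0 y).

(* Q(y~, x~, D): x ~ D, independent c_i ~ Bernoulli(a_i), yhat = x /\ c. *)
Definition acoef (yt xt : 'I_n -> R) (i : 'I_n) : R :=
  if xt i != 0 then yt i / xt i else 0.

Definition Qdist (yt xt : 'I_n -> R) (D : bvec -> R) (yh : bvec) : R :=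
  \sum_(x : bvec) \sum_(c : bvec)
     D x * Ind (acoef yt xt) c *
     (if yh == [ffun i => x i && c i] then 1 else 0).

End Defs.

(* Main.v *)
Require Import Defs.
From HB Require Import structures.
From mathcomp Require Import all_boot all_order all_algebra.
From mathcomp Require Import ring lra.
Import Order.TTheory GRing.Theory Num.Theory.
Local Open Scope ring_scope.
Set Implicit Arguments. Unset Strict Implicit. Unset Printing Implicit Defensive.

Definition LL (R : realFieldType) (v : R) (b : bool) : R := if b then v else 1 - v.
Definition sg (R : realFieldType) (b : bool) : R := if b then 1 else -1.
Arguments sg {R} b.

Definition flip n (i : 'I_n) (y : bvec n) : bvec n :=
  [ffun k => if k == i then ~~ y k else y k].

Lemma flipK n (i : 'I_n) : involutive (flip i).
Proof. by move=> y; apply/ffunP => k; rewrite !ffunE; case: (k == i) => //=; rewrite negbK. Qed.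

Definition Q2 (R : realFieldType) n (x : 'I_n -> R) (i j : 'I_n) (y : bvec n) : R :=
  \prod_(k | (k != i) && (k != j)) LL (x k) (y k).

Definition Q1 (R : realFieldType) n (x : 'I_n -> R) (i : 'I_n) (y : bvec n) : R :=
  \prod_(k | k != i) LL (x k) (y k).

Lemma Ind2 (R : realFieldType) n (x : 'I_n -> R) i j y : i != j ->
  Ind x y = LL (x i) (y i) * LL (x j) (y j) * Q2 x i j y.
Proof.
move=> hij; rewrite /Ind /Q2 (bigD1 i) //= (bigD1 j) /=; last by rewrite eq_sym.
by rewrite mulrA.
Qed.

Lemma Ind1 (R : realFieldType) n (x : 'I_n -> R) i y :
  Ind x y = LL (x i) (y i) * Q1 x i y.
Proof. by rewrite /Ind /Q1 (bigD1 i). Qed.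

Lemma Q2_upd (R : realFieldType) n (x : 'I_n -> R) i j u w y :
  Q2 (upd (upd x i u) j w) i j y = Q2 x i j y.
Proof. by apply: eq_bigr => k /andP[ki kj]; rewrite /upd (negbTE ki) (negbTE kj). Qed.

Lemma Q1_upd (R : realFieldType) n (x : 'I_n -> R) i u y :
  Q1 (upd x i u) i y = Q1 x i y.
Proof. by apply: eq_bigr => k ki; rewrite /upd (negbTE ki). Qed.

Lemma Q2_flipi (R : realFieldType) n (x : 'I_n -> R) i j y :
  Q2 x i j (flip i y) = Q2 x i j y.
Proof. by apply: eq_bigr => k /andP[ki kj]; rewrite /flip ffunE (negbTE ki). Qed.

Lemma Q2_flipj (R : realFieldType) n (x : 'I_n -> R) i j y :
  Q2 x i j (flip j y) = Q2 x i j y.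
Proof. by apply: eq_bigr => k /andP[ki kj]; rewrite /flip ffunE (negbTE kj). Qed.

Lemma LL_ge0 (R : realFieldType) (v : R) b : 0 <= v <= 1 -> 0 <= LL v b.
Proof. by case/andP=> h0 h1; rewrite /LL; case: b => //; rewrite subr_ge0. Qed.

Lemma Q2_ge0 (R : realFieldType) n (x : 'I_n -> R) i j y : in01 x -> 0 <= Q2 x i j y.
Proof. by move=> hx; apply: prodr_ge0 => k _; apply: LL_ge0. Qed.

Lemma Ind_ge0 (R : realFieldType) n (x : 'I_n -> R) y : in01 x -> 0 <= Ind x y.
Proof. by move=> hx; apply: prodr_ge0 => k _; apply: (LL_ge0 (y k) (hx k)). Qed.

Definition Fm (R : realFieldType) n (h : bvec n -> R) (x : 'I_n -> R) := expect (Ind x) h.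

Lemma C2_le0 (R : realFieldType) n (h : bvec n -> R) (x : 'I_n -> R) i j :
  i != j -> in01 x -> submodular h ->
  \sum_(y : bvec n) sg (y i) * sg (y j) * (Q2 x i j y * h y) <= 0.
Proof.
move=> hij hx hs.
have hji : j != i by rewrite eq_sym.
set G := fun y => Q2 x i j y * h y.
have E : forall y : bvec n, sg (y i) * sg (y j) * G y =
   (if y i && y j then G y else 0) - (if ~~ y i && y j then G y else 0)
   - (if y i && ~~ y j then G y else 0) + (if ~~ y i && ~~ y j then G y else 0).
  by move=> y; rewrite /sg; case: (y i); case: (y j) => /=; ring.
rewrite (eq_bigr _ (fun y _ => E y)) big_split /= !sumrB.
have S01 : \sum_(y : bvec n) (if ~~ y i && y j then G y else 0) =
           \sum_(y : bvec n) (if y i && y j then G (flip i y) else 0).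
  rewrite (reindex_inj (inv_inj (flipK i))); apply: eq_bigr => y _.
  by rewrite /flip !ffunE eqxx (negbTE hji) negbK.
have S10 : \sum_(y : bvec n) (if y i && ~~ y j then G y else 0) =
           \sum_(y : bvec n) (if y i && y j then G (flip j y) else 0).
  rewrite (reindex_inj (inv_inj (flipK j))); apply: eq_bigr => y _.
  by rewrite /flip !ffunE eqxx (negbTE hij) negbK.
have S00 : \sum_(y : bvec n) (if ~~ y i && ~~ y j then G y else 0) =
           \sum_(y : bvec n) (if y i && y j then G (flip i (flip j y)) else 0).
  rewrite (reindex_inj (inj_comp (inv_inj (flipK i)) (inv_inj (flipK j)))).
  apply: eq_bigr => y _.
  by rewrite /= /flip !ffunE !eqxx (negbTE hij) (negbTE hji) !negbK.
rewrite S01 S10 S00 -!sumrB -big_split /= -oppr_ge0 -sumrN.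
apply: sumr_ge0 => y _.
case yi: (y i); case yj: (y j) => /=; rewrite ?subrr ?addr0 ?oppr0 //.
rewrite /G !Q2_flipi !Q2_flipj.
have -> : Q2 x i j y * h y - Q2 x i j y * h (flip i y) - Q2 x i j y * h (flip j y) +
  Q2 x i j y * h (flip i (flip j y)) =
  Q2 x i j y * (h y + h (flip i (flip j y)) - (h (flip i y) + h (flip j y))) by ring.
rewrite -mulrN; apply: mulr_ge0; first exact: Q2_ge0.
rewrite oppr_ge0 subr_le0.
have := hs (flip i y) (flip j y).
have -> : [ffun k => flip i y k || flip j y k] = y.
  apply/ffunP => k; rewrite !ffunE.
  case: (eqVneq k i) => [->|ki]; first by rewrite (negbTE hij) yi orbT.
  case: (eqVneq k j) => [->|kj]; first by rewrite yj.
  by rewrite orbb.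
have -> : [ffun k => flip i y k && flip j y k] = flip i (flip j y).
  apply/ffunP => k; rewrite !ffunE.
  case: (eqVneq k i) => [->|ki]; first by rewrite (negbTE hij) yi.
  case: (eqVneq k j) => [->|kj]; first by rewrite yj andbF.
  by rewrite andbb.
by [].
Qed.

Lemma LLD (R : realFieldType) (v t : R) b : LL (v + t) b = LL v b + sg b * t.
Proof. by rewrite /LL /sg; case: b; ring. Qed.
Lemma LLB (R : realFieldType) (v t : R) b : LL (v - t) b = LL v b - sg b * t.
Proof. by rewrite /LL /sg; case: b; ring. Qed.

Lemma pair_step (R : realFieldType) n (h : bvec n -> R) (x : 'I_n -> R) i j (p e1 e2 : R) :
  i != j -> in01 x -> submodular h -> 0 <= p -> p <= 1 -> p * e1 = (1 - p) * e2 ->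
  Fm h x <= p * Fm h (upd (upd x i (x i + e1)) j (x j - e1))
            + (1 - p) * Fm h (upd (upd x i (x i - e2)) j (x j + e2)).
Proof.
move=> hij hx hs hp0 hp1 hpe.
have hji : j != i by rewrite eq_sym.
have key : forall u w (y : bvec n), Ind (upd (upd x i u) j w) y = LL u (y i) * LL w (y j) * Q2 x i j y.
  move=> u w y; rewrite (Ind2 _ _ hij) Q2_upd /upd eqxx (negbTE hij) eqxx //.
have hz : p * e1 - (1 - p) * e2 = 0 by rewrite hpe subrr.
set c := p * e1 ^+ 2 + (1 - p) * e2 ^+ 2.
have pw : forall y : bvec n,
  p * (Ind (upd (upd x i (x i + e1)) j (x j - e1)) y * h y) +
  (1 - p) * (Ind (upd (upd x i (x i - e2)) j (x j + e2)) y * h y) =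
  Ind x y * h y - c * (sg (y i) * sg (y j) * (Q2 x i j y * h y)).
  move=> y; rewrite !key (Ind2 _ _ hij) !LLD ?LLB.
  apply/eqP; rewrite -subr_eq0; apply/eqP.
  transitivity ((sg (y i) * LL (x j) (y j) - sg (y j) * LL (x i) (y i)) * Q2 x i j y * h y
     * (p * e1 - (1 - p) * e2)); first by rewrite /c; ring.
  by rewrite hz mulr0.
rewrite /Fm /expect !mulr_sumr -big_split /= (eq_bigr _ (fun y _ => pw y)) sumrB -mulr_sumr.
rewrite lerDl -mulrN; apply: mulr_ge0.
  by rewrite /c; apply: addr_ge0; apply: mulr_ge0; rewrite ?subr_ge0 ?sqr_ge0.
by rewrite oppr_ge0; apply: C2_le0.
Qed.

Lemma lone_step (R : realFieldType) n (h : bvec n -> R) (x : 'I_n -> R) i :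
  Fm h x = x i * Fm h (upd x i 1) + (1 - x i) * Fm h (upd x i 0).
Proof.
have key : forall u (y : bvec n), Ind (upd x i u) y = LL u (y i) * Q1 x i y.
  by move=> u y; rewrite (Ind1 _ i) Q1_upd /upd eqxx.
rewrite /Fm /expect !mulr_sumr -big_split /=; apply: eq_bigr => y _.
rewrite !key (Ind1 _ i) /LL; case: (y i); ring.
Qed.

Lemma int_step (R : realFieldType) n (h : bvec n -> R) (x : 'I_n -> R) :
  (forall i, x i = 0 \/ x i = 1) ->
  Fm h x = expect (fun y => if y == [ffun i => x i == 1] then 1 else 0) h.
Proof.
move=> hx; rewrite /Fm /expect; apply: eq_bigr => y _; congr (_ * _).
case: (boolP [forall k, y k == (x k == 1)]) => [/forallP H|/forallPn [k Hk]].
  have -> : y = [ffun i => x i == 1] by apply/ffunP => k; rewrite ffunE; apply/eqP.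
  rewrite eqxx /Ind; apply: big1 => k _; rewrite ffunE.
  by case: (hx k) => ->; rewrite ?eqxx ?subr0 // (_ : (0:R) == 1 = false) // eq_sym oner_eq0.
have -> : (y == [ffun i => x i == 1]) = false.
  apply/negbTE; apply: contra Hk => /eqP ->; by rewrite ffunE.
rewrite /Ind (bigD1 k) //=.
have h01 : ((0:R) == 1) = false by rewrite eq_sym oner_eq0.
move: Hk; case: (y k) => /=; case: (hx k) => -> //=; rewrite ?eqxx ?h01 //;
  rewrite ?subrr ?mul0r //.
Qed.

Lemma expect_mix (R : realFieldType) n (a b : R) (D1 D2 h : bvec n -> R) :
  expect (fun y => a * D1 y + b * D2 y) h = a * expect D1 h + b * expect D2 h.
Proof.
rewrite /expect !mulr_sumr -big_split /=; apply: eq_bigr => y _; ring.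
Qed.

Lemma pipage_ge (R : realFieldType) n (h : bvec n -> R) x D :
  submodular h -> pipage x D -> in01 x -> Fm h x <= expect D h.
Proof.
move=> hs; elim => {x D}.
- by move=> x hx _; rewrite int_step.
- move=> x i j D1 D2 hij fi fj _ IH1 _ IH2 hx.
  rewrite expect_mix.
  move: fi fj; rewrite /fractional => /andP[xi0 xi1] /andP[xj0 xj1].
  have e1p : 0 < pip_e1 x i j by rewrite /pip_e1 lt_min subr_gt0 xi1 xj0.
  have e2p : 0 < pip_e2 x i j by rewrite /pip_e2 lt_min subr_gt0 xi0 xj1.
  have e1a : pip_e1 x i j <= 1 - x i by rewrite /pip_e1 ge_min lexx.
  have e1b : pip_e1 x i j <= x j by rewrite /pip_e1 ge_min lexx orbT.
  have e2a : pip_e2 x i j <= x i by rewrite /pip_e2 ge_min lexx.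
  have e2b : pip_e2 x i j <= 1 - x j by rewrite /pip_e2 ge_min lexx orbT.
  move: e1p e2p e1a e1b e2a e2b IH1 IH2.
  set e1 := pip_e1 x i j; set e2 := pip_e2 x i j => e1p e2p e1a e1b e2a e2b IH1 IH2.
  have hji : j != i by rewrite eq_sym.
  have in1 : in01 (upd (upd x i (x i + e1)) j (x j - e1)).
    move=> k; rewrite /upd; case: (k == j).
      by apply/andP; split; lra.
    case: (k == i); last exact: hx.
    by apply/andP; split; lra.
  have in2 : in01 (upd (upd x i (x i - e2)) j (x j + e2)).
    move=> k; rewrite /upd; case: (k == j).
      by apply/andP; split; lra.
    case: (k == i); last exact: hx.
    by apply/andP; split; lra.
  have s0 : e1 + e2 != 0 by rewrite gt_eqF // addr_gt0.
  have sp : 0 < e1 + e2 by rewrite addr_gt0.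
  set p := e2 / (e1 + e2).
  have hp0 : 0 <= p by rewrite /p divr_ge0 // ltW.
  have hp1 : p <= 1 by rewrite /p ler_pdivrMr // mul1r lerDr ltW.
  have hpe : p * e1 = (1 - p) * e2 by rewrite /p; field.
  apply: le_trans (pair_step hij hx hs hp0 hp1 hpe) _.
  apply: lerD; apply: ler_wpM2l; rewrite ?subr_ge0 //.
  + exact: IH1.
  + exact: IH2.
- move=> x i D1 D0 fi _ _ IH1 _ IH0 hx.
  rewrite expect_mix (lone_step h x i).
  move: fi; rewrite /fractional => /andP[xi0 xi1].
  have in1 : forall v : R, 0 <= v <= 1 -> in01 (upd x i v).
    by move=> v hv k; rewrite /upd; case: (k == i).
  apply: lerD; apply: ler_wpM2l.
  + exact: ltW.
  + by apply: IH1; apply: in1; rewrite lexx ler01.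
  + by rewrite subr_ge0 ltW.
  + by apply: IH0; apply: in1; rewrite lexx ler01.
Qed.

Lemma gsub (R : realFieldType) n (a : 'I_n -> R) (f : bvec n -> R) :
  in01 a -> submodular f ->
  submodular (fun x : bvec n => \sum_(c : bvec n) Ind a c * f [ffun k => x k && c k]).
Proof.
move=> ha hf x y /=; rewrite -!big_split /=; apply: ler_sum => c _.
rewrite -!mulrDr; apply: ler_wpM2l; first exact: Ind_ge0.
have E1 : [ffun k => [ffun k0 => x k0 || y k0] k && c k] =
   [ffun k => [ffun k0 => x k0 && c k0] k || [ffun k0 => y k0 && c k0] k].
  by apply/ffunP=> k; rewrite !ffunE; case: (x k); case: (y k); case: (c k).
have E2 : [ffun k => [ffun k0 => x k0 && y k0] k && c k] =
   [ffun k => [ffun k0 => x k0 && c k0] k && [ffun k0 => y k0 && c k0] k].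
  by apply/ffunP=> k; rewrite !ffunE; case: (x k); case: (y k); case: (c k).
by rewrite E1 E2; apply: hf.
Qed.

Lemma expect_Q (R : realFieldType) n (yt xt : 'I_n -> R) (D f : bvec n -> R) :
  expect (Qdist yt xt D) f =
  expect D (fun x => \sum_(c : bvec n) Ind (acoef yt xt) c * f [ffun k => x k && c k]).
Proof.
rewrite /expect /Qdist.
transitivity (\sum_(yh : bvec n) \sum_(x : bvec n) \sum_(c : bvec n)
   D x * Ind (acoef yt xt) c * (if yh == [ffun i => x i && c i] then 1 else 0) * f yh).
  apply: eq_bigr => yh _; rewrite mulr_suml; apply: eq_bigr => x _; by rewrite mulr_suml.
rewrite exchange_big; apply: eq_bigr => x _.
rewrite exchange_big mulr_sumr; apply: eq_bigr => c _.
rewrite (bigD1 [ffun i => x i && c i]) //= eqxx big1 => [|yh /negbTE -> ]; last by rewrite !mulr0 mul0r.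
by rewrite addr0 mulr1 mulrA.
Qed.

Lemma prod_ind (R : realFieldType) n (P : pred 'I_n) :
  \prod_(k < n) (if P k then 1 else 0 : R) = if [forall k, P k] then 1 else 0.
Proof.
case: (boolP [forall k, P k]) => [/forallP H|/forallPn [k Hk]].
  by apply: big1 => k _; rewrite H.
by rewrite (bigD1 k) //= (negbTE Hk) mul0r.
Qed.

Lemma prod_split (R : realFieldType) n (yt xt a : 'I_n -> R) (yh : bvec n) :
  (forall k, xt k * a k = yt k) ->
  \sum_(x : bvec n) \sum_(c : bvec n) Ind xt x * Ind a c *
      (if yh == [ffun k => x k && c k] then 1 else 0) = Ind yt yh.
Proof.
move=> hxa.
pose W k b1 b2 := LL (xt k) b1 * LL (a k) b2 * (if yh k == b1 && b2 then 1 else 0 : R).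
have -> : Ind yt yh = \prod_(k < n) \sum_(b1 : bool) \sum_(b2 : bool) W k b1 b2.
  apply: eq_bigr => k _; rewrite !big_bool /W /LL /=; rewrite -hxa.
  by case: (yh k) => /=; ring.
rewrite bigA_distr_bigA; apply: eq_bigr => x _.
rewrite bigA_distr_bigA; apply: eq_bigr => c _.
rewrite /W !big_split /= prod_ind.
have -> : [forall k, yh k == x k && c k] = (yh == [ffun k => x k && c k]).
  apply/forallP/eqP => [H|->]; last by move=> k; rewrite ffunE.
  by apply/ffunP => k; rewrite ffunE; apply/eqP.
by [].
Qed.

Lemma expect_Ind (R : realFieldType) n (yt xt a : 'I_n -> R) (f : bvec n -> R) :
  (forall k, xt k * a k = yt k) ->
  expect (Ind yt) f =
  expect (Ind xt) (fun x => \sum_(c : bvec n) Ind a c * f [ffun k => x k && c k]).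
Proof.
move=> hxa; rewrite /expect.
transitivity (\sum_(yh : bvec n) \sum_(x : bvec n) \sum_(c : bvec n)
   Ind xt x * Ind a c * (if yh == [ffun i => x i && c i] then 1 else 0) * f yh).
  apply: eq_bigr => yh _; rewrite -(prod_split yh hxa) mulr_suml.
  by apply: eq_bigr => x _; rewrite mulr_suml.
rewrite exchange_big; apply: eq_bigr => x _.
rewrite exchange_big mulr_sumr; apply: eq_bigr => c _.
rewrite (bigD1 [ffun i => x i && c i]) //= eqxx big1 => [|yh /negbTE -> ]; last by rewrite !mulr0 mul0r.
by rewrite addr0 mulr1 mulrA.
Qed.

Theorem lemma14 (R : realFieldType) (n l : nat) (M : {set {set 'I_n}})
    (xt yt : 'I_n -> R) (D : bvec n -> R) :
  is_matroid M -> Xtilde l xt -> Ytilde M xt yt -> pipage xt D ->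
  forall f : bvec n -> R, submodular f ->
    expect (Ind yt) f <= expect (Qdist yt xt D) f.
Proof.
move=> _ [hx _] [hy _ hyx] hD f hf.
set a := acoef yt xt.
have ha : forall k, (0 <= a k <= 1) /\ xt k * a k = yt k.
  move=> k; rewrite /a /acoef.
  have /andP[x0 x1] := hx k; have /andP[y0 y1] := hy k; have yx := hyx k.
  case: (eqVneq (xt k) 0) => [xk0|xkn] /=.
    by rewrite lexx ler01 mulr0; split => //; apply/eqP; rewrite eq_le y0 -xk0 yx.
  have xp : 0 < xt k by rewrite lt_neqAle eq_sym xkn x0.
  split; last by rewrite mulrC divfK.
  by rewrite divr_ge0 //= ler_pdivrMr // mul1r.
have ha01 : in01 a by move=> k; case: (ha k).
have hxa : forall k, xt k * a k = yt k by move=> k; case: (ha k).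
rewrite (expect_Ind f hxa) expect_Q.
exact: (pipage_ge (gsub ha01 hf) hD hx).
Qed.
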